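(* Let $\rho:\mathbb{R}\to\mathbb{R}$ be a nonlinearity and $\mathcal{J}$ a finite index set. Suppose that $\{(\alpha_s,\beta_s,\gamma_s)\}_{s\in\mathcal{J}}$ are triples of real numbers such that $\sum_{s\in\mathcal{J}}\alpha_s\rho(\beta_s\cdot+\gamma_s)$ is constant, and let $j^*\in\mathcal{J}$ be such that $\alpha_{j^*}\ne0$. Then there exist a set $\mathcal{I}\subset\mathcal{J}$ with $j^*\in\mathcal{I}$, real numbers $\{\tilde\alpha_s\}_{s\in\mathcal{I}}$ with $\tilde\alpha_{j^*}\ne0$, and $\zeta\in\mathbb{R}$ such that $(\zeta,\{(\tilde\alpha_s,\beta_s,\gamma_s)\}_{s\in\mathcal{I}})$ is an affine symmetry of $\rho$.
   Context: A nonlinearity is a continuous function $\rho:\mathbb{R}\to\mathbb{R}$ that is not of the form $t\mapsto at+b$. An affine symmetry of $\rho$ is a collection $(\zeta,\{(\alpha_s,\beta_s,\gamma_s)\}_{s\in\mathcal{I}})$ of reals, with $\mathcal{I}$ nonempty finite, such that $\sum_{s\in\mathcal{I}}\alpha_s\rho(\beta_st+\gamma_s)=\zeta$ for all $t\in\mathbb{R}$, and there is no proper subset $\mathcal{I}'\subsetneq\mathcal{I}$ for which $\{\rho(\beta_s\cdot+\gamma_s):s\in\mathcal{I}'\}\cup\{\mathbf1\}$ is linearly dependent ($\mathbf1$ the constant function $1$). *)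

(* Defs.v *)
From HB Require Import structures.
From mathcomp Require Import all_boot all_order all_algebra.
From mathcomp Require Import all_classical all_reals topology normedtype.
Set Implicit Arguments. Unset Strict Implicit. Unset Printing Implicit Defensive.
Import Order.TTheory GRing.Theory Num.Theory.
Import numFieldNormedType.Exports.
Local Open Scope ring_scope.

Definition nonlinearity (R : realType) (rho : R -> R) : Prop :=
  continuous rho /\ ~ (exists a b : R, forall t : R, rho t = a * t + b).

Definition lin_dep_with_one (R : realType) (J : finType) (f : J -> R -> R)
    (I : {set J}) : Prop :=
  exists (c : J -> R) (c0 : R),
    (c0 != 0 \/ exists s, s \in I /\ c s != 0) /\
    (forall t : R, \sum_(s in I) c s * f s t + c0 = 0).

Definition affine_symmetry (R : realType) (rho : R -> R) (J : finType)
    (I : {set J}) (zeta : R) (alpha beta gamma : J -> R) : Prop :=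
  I != finset.set0 :> {set J} /\
  (forall t : R, \sum_(s in I) alpha s * rho (beta s * t + gamma s) = zeta) /\
  (forall I' : {set J}, I' \proper I ->
     ~ lin_dep_with_one (fun s t => rho (beta s * t + gamma s)) I').

(* Main.v *)
Require Import Defs.
From HB Require Import structures.
From mathcomp Require Import all_boot all_order all_algebra.
From mathcomp Require Import all_classical all_reals topology normedtype.
Import Order.TTheory GRing.Theory Num.Theory.
Import numFieldNormedType.Exports.
Local Open Scope ring_scope.

Section Key.
Variables (R : realType) (rho : R -> R) (J : finType) (beta gamma : J -> R) (jstar : J).
Let f s t := rho (beta s * t + gamma s).

Definition Pset (I : {set J}) := jstar \in I /\ exists (a : J -> R) (z : R),
  a jstar != 0 /\ forall t, \sum_(s in I) a s * f s t = z.

Lemma key n : forall I : {set J}, (#|I| <= n)%N -> Pset I ->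
  exists (I : {set J}) (alpha' : J -> R) (zeta : R),
    jstar \in I /\ alpha' jstar != 0 /\
    affine_symmetry rho I zeta alpha' beta gamma.
Proof.
elim: n => [|n IH] I hn [hj [a [z [ha hs]]]].
  by move: hn; rewrite leqn0 cards_eq0 => /eqP hI; rewrite hI inE in hj.
have [hmin|] := pselect (forall I' : {set J}, I' \proper I ->
     ~ lin_dep_with_one (fun s t => rho (beta s * t + gamma s)) I').
  exists I, a, z; split => //; split => //; split => //.
  by apply/eqP => hI; rewrite hI inE in hj.
move=> /existsNP [I' /not_implyP [hp /contrapT [c [c0 [hnz hsum]]]]].
have hsub : I' \subset I by move/andP: hp => [].
have hcard : (#|I'| < #|I|)%N by apply: proper_card.
have hsum' : forall t, \sum_(s in I') c s * f s t = - c0.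
  by move=> t; apply/eqP; rewrite -addr_eq0; apply/eqP; apply: hsum.
have [[hjI' hcj]|hA] := pselect (jstar \in I' /\ c jstar != 0).
  apply: (IH I'); first by rewrite -ltnS; apply: leq_trans hcard hn.
  by split => //; exists c, (- c0); split.
have [s0 [hs0 hcs0]] : exists s0, s0 \in I' /\ c s0 != 0.
  apply: contrapT => hno; case: hnz => // hc0.
  move: (hsum 0); rewrite big1 ?add0r; first by move/eqP; rewrite (negbTE hc0).
  move=> s hsI; case: (eqVneq (c s) 0) => [->|hcs]; first by rewrite mul0r.
  by exfalso; apply: hno; exists s.
have hs0j : s0 != jstar.
  by apply/eqP => e; apply: hA; rewrite -e.
have hs0I : s0 \in I := fintype.subsetP hsub _ hs0.
pose c' s := if s \in I' then c s else 0.
have hc'j : c' jstar = 0.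
  rewrite /c'; case: ifP => // hj'; case: (eqVneq (c jstar) 0) => // hcj.
  by exfalso; apply: hA.
pose lam := a s0 / c s0.
pose a' s := a s - lam * c' s.
apply: (IH (I :\ s0)).
  by move: hn; rewrite (cardsD1 s0 I) hs0I.
split; first by rewrite !inE eq_sym hs0j hj.
exists a', (z + lam * c0); split.
  by rewrite /a' hc'j mulr0 subr0.
move=> t.
have e1 : \sum_(s in I) a' s * f s t = z + lam * c0.
  rewrite /a'.
  under eq_bigr do rewrite mulrBl -mulrA.
  rewrite sumrB hs -mulr_sumr.
  have -> : \sum_(i in I) c' i * f i t = - c0.
    rewrite -(hsum' t) [RHS]big_mkcond [LHS]big_mkcond /=.
    apply: eq_bigr => s _; rewrite /c'.
    case: (boolP (s \in I')) => hsI'.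
      by have -> : s \in I := fintype.subsetP hsub s hsI'.
    by case: (s \in I); rewrite ?mul0r.
  by rewrite mulrN opprK.
rewrite -e1 (big_setD1 s0 hs0I) /= /a' /c' hs0 /lam.
by rewrite divfK // subrr mul0r add0r.
Qed.
End Key.

Theorem lemma7 (R : realType) (rho : R -> R) (J : finType)
    (alpha beta gamma : J -> R) (jstar : J) :
  nonlinearity rho ->
  (exists C : R, forall t : R,
      \sum_(s : J) alpha s * rho (beta s * t + gamma s) = C) ->
  alpha jstar != 0 ->
  exists (I : {set J}) (alpha' : J -> R) (zeta : R),
    jstar \in I /\ alpha' jstar != 0 /\
    affine_symmetry rho I zeta alpha' beta gamma.
Proof.
move=> _ [C hC] ha.
apply: (@key R rho J beta gamma jstar #|J| [set: J]); first exact: max_card.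
split; first by rewrite inE.
exists alpha, C; split => // t.
rewrite -(hC t); apply: eq_bigl => s; by rewrite inE.
Qed.
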